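(* Suppose $A\subseteq\mathbb Z_m$ with $d<|A|<m$, and let $G_d$ be the set of $x\in\mathbb Z_m$ such that $|(A+x)\cup A|\le|A|+d$. Then $|G_d|\le\frac{|A|^2}{|A|-d}$.
   Context: $A+x=\{a+x:a\in A\}$ in the cyclic group $\mathbb Z_m$. *)

(* Defs.v *)
From mathcomp Require Import all_boot all_order all_algebra.
Set Implicit Arguments. Unset Strict Implicit. Unset Printing Implicit Defensive.
Import GRing.Theory Num.Theory.

Definition shift_set (m : nat) (A : {set 'Z_m}) (x : 'Z_m) : {set 'Z_m} :=
  [set (a + x)%R | a in A].

Definition Gd (m : nat) (A : {set 'Z_m}) (d : nat) : {set 'Z_m} :=
  [set x : 'Z_m | #|shift_set A x :|: A| <= #|A| + d].

(* Main.v *)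
Require Import Defs.
From mathcomp Require Import all_boot all_order all_algebra.
Import GRing.Theory Num.Theory.
From mathcomp Require Import zify.
Lemma cardIsum (T : finType) (A B : {set T}) : #|B :&: A| = \sum_(y in A) (y \in B).
Proof.
rewrite -sum1_card [LHS]big_mkcond [RHS]big_mkcond /=; apply: eq_bigr => y _.
by rewrite inE; case: (y \in B); case: (y \in A).
Qed.

Lemma mem_shift m (A : {set 'Z_m}) x y : (y \in shift_set A x) = (y - x \in A)%R.
Proof.
apply/imsetP/idP => [[a Ha ->]|H]; first by rewrite GRing.addrK.
by exists (y - x)%R => //; rewrite GRing.subrK.
Qed.

Lemma card_shift m (A : {set 'Z_m}) x : #|shift_set A x| = #|A|.
Proof. by apply: card_imset; apply: GRing.addIr. Qed.

Lemma sum_inter m (A : {set 'Z_m}) :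
  \sum_x #|shift_set A x :&: A| = #|A| * #|A|.
Proof.
under eq_bigr do rewrite cardIsum.
rewrite exchange_big /= -sum_nat_const; apply: eq_bigr => y Hy.
under eq_bigr do rewrite mem_shift.
have inj : injective (fun x : 'Z_m => y - x)%R.
  by move=> a b /GRing.addrI /GRing.oppr_inj.
rewrite -(card_preimset A inj) -sum1_card [RHS]big_mkcond /=.
by apply: eq_bigr => x _; rewrite inE; case: (_ \in A).
Qed.

Lemma inGd m (A : {set 'Z_m}) d x : x \in Gd A d -> #|A| - d <= #|shift_set A x :&: A|.
Proof.
rewrite inE cardsU card_shift => H.
have H1 : #|shift_set A x :&: A| <= #|A|.
  by rewrite -(card_shift _ A x) subset_leq_card // subsetIl.
lia.
Qed.

Theorem lemma2p6 (m : nat) (hm : 1 < m) (A : {set 'Z_m}) (d : nat)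
    (hdA : d < #|A|) (hAm : #|A| < m) :
  ((#|Gd A d|)%:R <= ((#|A| ^ 2)%:R / (#|A|%:R - d%:R) : rat))%R.
Proof.
have key : #|Gd A d| * (#|A| - d) <= #|A| * #|A|.
  rewrite -sum_inter -sum1_card big_distrl /= mul1n.
  apply: (@leq_trans (\sum_(x in Gd A d) #|shift_set A x :&: A|)).
    by apply: leq_sum => x; apply: inGd.
  by rewrite [X in _ <= X](bigID (fun x => x \in Gd A d)) /= leq_addr.
have hpos : (0 < #|A|%:R - d%:R :> rat)%R by rewrite subr_gt0 ltr_nat.
rewrite ler_pdivlMr // -natrB ?(ltnW hdA) // -natrM ler_nat expnS expn1.
exact: key.
Qed.
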